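(* In the session calculus, weak fairness of components coincides with justness: a path (starting in a network state) is WC-fair if and only if it is just.
   Context: Session calculus. Fix sets of locations $p,q,r,\dots$, labels $\lambda$ and recursion variables $X,Y$. Threads: $P ::= \mathbf{end} \mid \bigoplus_{i\in I} p_i!\lambda_i;P_i \mid \sum_{i\in I} p_i?\lambda_i;P_i \mid X \mid \mu X.P$, with $I$ finite (nonempty for $\bigoplus$) and expressions $\mu X.X$, $\mu X.\mu Y.P$ excluded. Networks: $N ::= p[\![P]\!] \mid 0 \mid N\parallel N$; in a network all locations are distinct, all threads are closed, and every location named in a send or receive is a location of $N$. Thread states additionally allow the form $\langle q!\lambda\rangle;P$ (an output already selected); network states are built from located thread states likewise, taken modulo the structural congruence $\equiv$ (associativity, commutativity of $\parallel$, $N\parallel 0\equiv N$). The transition relation is the least relation closed under $\equiv$ containing: (choice) $p[\![\bigoplus_{i\in I}p_i!\lambda_i;P_i]\!]\parallel N \xrightarrow{\tau} p[\![\langle p_k!\lambda_k\rangle;P_k]\!]\parallel N$ for $k\in I$; (unfold) $p[\![\mu X.P]\!]\parallel N\xrightarrow{\tau} p[\![P\{\mu X.P/X\}]\!]\parallel N$; (comm) $p_k[\![\langle q!\lambda_k\rangle;Q]\!]\parallel q[\![\sum_{i\in I}p_i?\lambda_i;P_i]\!]\parallel N \xrightarrow{(p_k,\lambda_k,q)} p_k[\![Q]\!]\parallel q[\![P_k]\!]\parallel N$ for $k\in I$. For a transition $t$, $\mathrm{comp}(t)$ is the single location moving in a $\tau$-transition and $\{p,q\}$ for a label $(p,\lambda,q)$;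 $t$ involves $p$ if $p\in\mathrm{comp}(t)$; $t,u$ are concurrent if $\mathrm{comp}(t)\cap\mathrm{comp}(u)=\emptyset$. A path is a network state with a maximal (infinite or ending in a state without outgoing transitions) sequence of transitions. WC: location $p$ is enabled in a state if some transition from it involves $p$; perpetually enabled on a path if enabled in all its states. A path $\pi$ is WC-fair if for every suffix $\pi'$ and every location perpetually enabled on $\pi'$, $\pi'$ contains a transition involving that location. Justness: $\pi$ is just if for every suffix of $\pi$ starting in state $s$ and every transition $t$ enabled in $s$, that suffix contains a transition $u$ not concurrent with $t$. *)

(* Defs.v *)
From Stdlib Require Import List Arith.
Import ListNotations.
Set Implicit Arguments.

Section Calculus.
Variables (Loc Lab : Type).

(* Recursion variables are natural numbers.
   TSel q l P is the thread state <q!l>;P (output already selected). *)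
Inductive thread : Type :=
| TEnd : thread
| TSend : list (Loc * Lab * thread) -> thread   (* (+)_{i in I} p_i!l_i;P_i *)
| TRecv : list (Loc * Lab * thread) -> thread   (* Sum_{i in I} p_i?l_i;P_i *)
| TVar : nat -> thread
| TMu : nat -> thread -> thread
| TSel : Loc -> Lab -> thread -> thread.

(* naive substitution P{R/X}; it is capture-free since R is closed *)
Fixpoint subst (X : nat) (R : thread) (P : thread) : thread :=
  let fix sb (bs : list (Loc * Lab * thread)) :=
      match bs with
      | [] => []
      | (p, l, Q) :: r => (p, l, subst X R Q) :: sb r
      end in
  match P with
  | TEnd => TEnd
  | TSend bs => TSend (sb bs)
  | TRecv bs => TRecv (sb bs)
  | TVar Y => if Nat.eqb X Y then R else TVar Y
  | TMu Y Q => if Nat.eqb X Y then TMu Y Q else TMu Y (subst X R Q)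
  | TSel q l Q => TSel q l (subst X R Q)
  end.

Fixpoint thread_ok (P : thread) : Prop :=
  let fix ok (bs : list (Loc * Lab * thread)) :=
      match bs with
      | [] => True
      | (_, _, Q) :: r => thread_ok Q /\ ok r
      end in
  match P with
  | TEnd => True
  | TSend bs => bs <> [] /\ ok bs
  | TRecv bs => ok bs
  | TVar _ => True
  | TMu X Q =>
      Q <> TVar X /\ (forall Y R, Q <> TMu Y R) /\ thread_ok Q
  | TSel _ _ _ => False
  end.

Definition tstate_ok (P : thread) : Prop :=
  thread_ok P \/ exists q l Q, P = TSel q l Q /\ thread_ok Q.

Fixpoint fv_in (B : list nat) (P : thread) : Prop :=
  let fix ok (bs : list (Loc * Lab * thread)) :=
      match bs with
      | [] => True
      | (_, _, Q) :: r => fv_in B Q /\ ok r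
      end in
  match P with
  | TEnd => True
  | TSend bs => ok bs
  | TRecv bs => ok bs
  | TVar X => In X B
  | TMu X Q => fv_in (X :: B) Q
  | TSel _ _ Q => fv_in B Q
  end.

Definition closed (P : thread) : Prop := fv_in [] P.

Fixpoint names_in (D : Loc -> Prop) (P : thread) : Prop :=
  let fix ok (bs : list (Loc * Lab * thread)) :=
      match bs with
      | [] => True
      | (p, _, Q) :: r => D p /\ names_in D Q /\ ok r
      end in
  match P with
  | TEnd => True
  | TSend bs => ok bs
  | TRecv bs => ok bs
  | TVar _ => True
  | TMu _ Q => names_in D Q
  | TSel q _ Q => D q /\ names_in D Q
  end.

(* Network states modulo structural congruence: a partial map from
   locations to thread states (locations are automatically distinct). *)
Definition nstate := Loc -> option thread.

Definition dom (N : nstate) (p : Loc) : Prop := N p <> None.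

Definition wf_nstate (N : nstate) : Prop :=
  (exists L : list Loc, forall p, dom N p -> In p L) /\
  (forall p P, N p = Some P ->
     tstate_ok P /\ closed P /\ names_in (dom N) P).

(* transition labels; a tau carries the (unique) moving location *)
Inductive act : Type :=
| ATau : Loc -> act
| AComm : Loc -> Lab -> Loc -> act.

Definition involves (p : Loc) (a : act) : Prop :=
  match a with
  | ATau q => p = q
  | AComm q _ r => p = q \/ p = r
  end.

Definition concurrent (a b : act) : Prop :=
  ~ exists p, involves p a /\ involves p b.

Inductive step : nstate -> act -> nstate -> Prop :=
| StChoice : forall (N N' : nstate) p bs q l P,
    N p = Some (TSend bs) -> In (q, l, P) bs ->
    N' p = Some (TSel q l P) ->
    (forall r, r <> p -> N' r = N r) ->
    step N (ATau p) N'
| StUnfold : forall (N N' : nstate) p X P,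
    N p = Some (TMu X P) ->
    N' p = Some (subst X (TMu X P) P) ->
    (forall r, r <> p -> N' r = N r) ->
    step N (ATau p) N'
| StComm : forall (N N' : nstate) p q l Q bs P,
    p <> q ->
    N p = Some (TSel q l Q) ->
    N q = Some (TRecv bs) -> In (p, l, P) bs ->
    N' p = Some Q -> N' q = Some P ->
    (forall r, r <> p -> r <> q -> N' r = N r) ->
    step N (AComm p l q) N'.

Definition enabled (N : nstate) (p : Loc) : Prop :=
  exists a N', step N a N' /\ involves p a.

(* A path: states pst 0, pst 1, ... and transitions pact i from pst i to
   pst (i+1); plen = None for infinite paths, Some n when the path ends
   in pst n.  Values beyond the length are irrelevant. *)
Record path : Type := { pst : nat -> nstate; pact : nat -> act; plen : option nat }.

Definition idx_state (pi : path) (i : nat) : Prop :=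
  match plen pi with None => True | Some n => i <= n end.
Definition idx_trans (pi : path) (i : nat) : Prop :=
  match plen pi with None => True | Some n => i < n end.

Definition is_path (pi : path) : Prop :=
  (forall i, idx_trans pi i -> step (pst pi i) (pact pi i) (pst pi (S i))) /\
  (forall n, plen pi = Some n -> forall a N', ~ step (pst pi n) a N').

(* suffixes are indexed by their starting state index k *)
Definition wc_fair (pi : path) : Prop :=
  forall k p, idx_state pi k ->
    (forall i, k <= i -> idx_state pi i -> enabled (pst pi i) p) ->
    exists j, k <= j /\ idx_trans pi j /\ involves p (pact pi j).

Definition just (pi : path) : Prop :=
  forall k a N', idx_state pi k -> step (pst pi k) a N' ->
    exists j, k <= j /\ idx_trans pi j /\ ~ concurrent a (pact pi j).

End Calculus.

(* Main.v *)
Require Import Defs.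
From Stdlib Require Import List Arith.
From Stdlib Require Import Classical ClassicalEpsilon Lia.
Import ListNotations.
Set Implicit Arguments.

Section Proofs.
Variables (Loc Lab : Type).
Implicit Types (N M : nstate Loc Lab) (a : act Loc Lab) (pi : path Loc Lab).

Fixpoint tsize (P : thread Loc Lab) : nat :=
  match P with
  | TSend bs | TRecv bs => S (fold_right (fun b n => tsize (snd b) + n) 0 bs)
  | TMu _ Q | TSel _ _ Q => S (tsize Q)
  | _ => 0
  end.

Lemma In_size (x : Loc) (l : Lab) P bs :
  In (x, l, P) bs -> tsize P < tsize (TRecv bs).
Proof.
  simpl. induction bs as [|b bs IH]; simpl; [tauto|].
  intros [->|H]; simpl; [lia|]. specialize (IH H). lia.
Qed.

Lemma frame N a N' r : step N a N' -> ~ involves r a -> N' r = N r.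
Proof.
  intros H Hn; destruct H; simpl in Hn.
  - apply H2; auto.
  - apply H1; auto.
  - apply H5; auto.
Qed.

Lemma sel_partner N a N' r x l Q :
  step N a N' -> N r = Some (TSel x l Q) -> involves r a -> a = AComm r l x.
Proof.
  intros H E I; destruct H; simpl in I.
  - subst; congruence.
  - subst; congruence.
  - destruct I; subst.
    + rewrite H0 in E; injection E; intros; subst; auto.
    + congruence.
Qed.

Lemma recv_step N a N' q bs :
  step N a N' -> N q = Some (TRecv bs) -> involves q a ->
  exists p l P, a = AComm p l q /\ In (p, l, P) bs /\ N' q = Some P.
Proof.
  intros H E I; destruct H; simpl in I.
  - subst; congruence.
  - subst; congruence.
  - destruct I; subst.
    + congruence.
    + rewrite H1 in E; injection E; intros; subst. eauto 7.
Qed.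

Lemma idx1 pi i : idx_state pi (S i) -> idx_trans pi i.
Proof. unfold idx_state, idx_trans; destruct (plen pi); auto; lia. Qed.
Lemma idx2 pi i : idx_trans pi i -> idx_state pi i.
Proof. unfold idx_state, idx_trans; destruct (plen pi); auto; lia. Qed.
Lemma idx3 pi i : idx_trans pi i -> idx_state pi (S i).
Proof. unfold idx_state, idx_trans; destruct (plen pi); auto; lia. Qed.
Lemma idx4 pi i j : j <= i -> idx_state pi i -> idx_state pi j.
Proof. unfold idx_state; destruct (plen pi); auto; lia. Qed.

Lemma const pi k r : is_path pi ->
  (forall j, k <= j -> idx_trans pi j -> ~ involves r (pact pi j)) ->
  forall i, k <= i -> idx_state pi i -> pst pi i r = pst pi k r.
Proof.
  intros [Hp _] Hn i Hi; induction Hi as [|i Hi IH]; auto.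
  intros Hs. pose proof (idx1 _ _ Hs) as Ht.
  rewrite (frame r (Hp i Ht)); auto. apply IH, idx2, Ht.
Qed.

Definition dec (P : Prop) : {P} + {~P} := excluded_middle_informative P.

Lemma transfer N a N' M :
  step N a N' -> (forall r, involves r a -> M r = N r) -> exists M', step M a M'.
Proof.
  intros H E; destruct H.
  - exists (fun r => if dec (r = p) then N' r else M r).
    eapply StChoice; eauto.
    + rewrite E; simpl; eauto.
    + destruct (dec (p = p)); [eauto|congruence].
    + intros r Hr; destruct (dec (r = p)); congruence.
  - exists (fun r => if dec (r = p) then N' r else M r).
    eapply StUnfold.
    + rewrite E; simpl; eauto.
    + destruct (dec (p = p)); [eauto|congruence].
    + intros r Hr; destruct (dec (r = p)); congruence.
  - exists (fun r => if dec (r = p) then N' r else if dec (r = q) then N' r else M r).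
    eapply StComm; eauto.
    + rewrite E; simpl; eauto.
    + rewrite E; simpl; eauto.
    + destruct (dec (p = p)); [eauto|congruence].
    + destruct (dec (q = p)); [congruence|]. destruct (dec (q = q)); [eauto|congruence].
    + intros r Hr Hr'; destruct (dec (r = p)); [congruence|].
      destruct (dec (r = q)); congruence.
Qed.

Lemma comm_inv N p l q N' : step N (AComm p l q) N' ->
  p <> q /\ exists Q bs P, N p = Some (TSel q l Q) /\ N q = Some (TRecv bs) /\ In (p, l, P) bs.
Proof. intros H; inversion H; subst; eauto 10. Qed.

Lemma some_involved a : exists p, involves p a.
Proof. destruct a; simpl; eauto. Qed.

Lemma wc_just pi : is_path pi -> wc_fair pi -> just pi.
Proof.
  intros Hp Hw k a N' Hk Hs.
  apply NNPP; intro Hno.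
  assert (Hc : forall j, k <= j -> idx_trans pi j -> concurrent a (pact pi j)).
  { intros j Hj Ht; apply NNPP; intro C; apply Hno; eauto. }
  destruct (some_involved a) as [p Hpa].
  destruct (Hw k p Hk) as [j [Hj [Ht Hi]]].
  - intros i Hi Hsi.
    destruct (transfer (pst pi i) Hs) as [M' HM].
    + intros r Hr. apply (const _ Hp); auto.
      intros j Hj Ht Hinv. apply (Hc j Hj Ht); eauto.
    + exists a, M'; auto.
  - apply (Hc j Hj Ht); eauto.
Qed.

Lemma just_wc pi : is_path pi -> just pi -> wc_fair pi.
Proof.
  intros Hp HJ k p Hk Hen.
  apply NNPP; intro Hno.
  assert (Hn : forall j, k <= j -> idx_trans pi j -> ~ involves p (pact pi j)).
  { intros j Hj Ht Hi; apply Hno; eauto. }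
  pose proof (const _ Hp Hn) as Hconst.
  destruct (Hen k (le_n k) Hk) as [a [N' [Hs Hia]]].
  destruct a as [p0 | p0 l q].
  -
    destruct (HJ k _ _ Hk Hs) as [j [Hkj [Ht C]]].
    apply C; intros [x [H1 H2]]. simpl in H1, Hia; subst.
    exact (Hn j Hkj Ht H2).
  - destruct (comm_inv Hs) as [Hneq [Q [bs [P [E1 [E2 Hin]]]]]].
    rename p0 into p0'. simpl in Hia. destruct Hia as [Hia|Hia]; subst p.
    + (* p is the sender, stuck as TSel q l Q *)
      set (m := fun i => tsize (match pst pi i q with Some P => P | None => TEnd _ _ end)).
      assert (Hrecv : forall i, k <= i -> idx_state pi i ->
                exists bs', pst pi i q = Some (TRecv bs')).
      { intros i Hi Hsi. destruct (Hen i Hi Hsi) as [a [N2 [Hs2 Hi2]]].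
        assert (Ep : pst pi i p0' = Some (TSel q l Q)) by (rewrite Hconst; auto).
        pose proof (sel_partner _ Hs2 Ep Hi2); subst.
        inversion Hs2; subst. eauto. }
      assert (Hmon : forall i, k <= i -> idx_trans pi i ->
                m (S i) <= m i /\ (involves q (pact pi i) -> m (S i) < m i)).
      { intros i Hi Ht.
        destruct (Hrecv i Hi (idx2 _ _ Ht)) as [bs' Eq].
        pose proof (proj1 Hp i Ht) as Hs2.
        assert (Hstr : involves q (pact pi i) -> m (S i) < m i).
        { intros Iq. destruct (recv_step _ Hs2 Eq Iq) as [x [y [P' [_ [HI E']]]]].
          unfold m; rewrite Eq, E'. apply (In_size _ _ _ _ HI). }
        split; auto.
        destruct (classic (involves q (pact pi i))) as [Iq|Iq].
        - specialize (Hstr Iq); lia.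
        - unfold m; rewrite (frame _ Hs2 Iq); auto. }
      assert (Hmon2 : forall i j, k <= i -> i <= j -> idx_state pi j -> m j <= m i).
      { intros i j Hi Hij; induction Hij as [|j Hij IH]; auto.
        intros Hsj. pose proof (idx1 _ _ Hsj) as Ht.
        destruct (Hmon j ltac:(lia) Ht). specialize (IH (idx2 _ _ Ht)). lia. }
      assert (Main : forall n i, k <= i -> idx_state pi i -> m i <= n -> False).
      { induction n as [|n IHn]; intros i Hi Hsi Hm;
        [pose proof (Hrecv i Hi Hsi) as [bs' Eq]; unfold m in Hm; rewrite Eq in Hm; simpl in Hm; lia|].
        destruct (Hen i Hi Hsi) as [a [N2 [Hs2 Hi2]]].
        assert (Ep : pst pi i p0' = Some (TSel q l Q)) by (rewrite Hconst; auto).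
        pose proof (sel_partner _ Hs2 Ep Hi2); subst.
        destruct (HJ i _ _ Hsi Hs2) as [j [Hij [Ht C]]].
        apply NNPP in C. destruct C as [x [H1 H2]]. simpl in H1.
        destruct H1; subst.
        - exact (Hn j ltac:(lia) Ht H2).
        - destruct (Hmon j ltac:(lia) Ht) as [_ Hlt].
          specialize (Hlt H2).
          pose proof (Hmon2 i j Hi Hij (idx2 _ _ Ht)).
          apply (IHn (S j)); [lia| apply idx3; auto | lia]. }
      exact (Main (m k) k (le_n k) Hk (le_n _)).
    + (* p is the receiver; sender p0' stuck as TSel p l Q *)
      assert (Hr : forall i, k <= i -> idx_state pi i -> pst pi i p0' = pst pi k p0').
      { intros i Hi; induction Hi as [|i Hi IH]; auto.
        intros Hsi. pose proof (idx1 _ _ Hsi) as Ht.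
        pose proof (proj1 Hp i Ht) as Hs2.
        destruct (classic (involves p0' (pact pi i))) as [I|I].
        - exfalso. rewrite E1 in IH. specialize (IH (idx2 _ _ Ht)).
          pose proof (sel_partner _ Hs2 IH I) as Ea.
          apply (Hn i Hi Ht). rewrite Ea; simpl; auto.
        - rewrite (frame _ Hs2 I). apply IH, idx2, Ht. }
      destruct (HJ k _ _ Hk Hs) as [j [Hkj [Ht C]]].
      apply NNPP in C. destruct C as [x [H1 H2]]. simpl in H1.
      destruct H1 as [H1|H1]; subst x.
      * pose proof (proj1 Hp j Ht) as Hs2.
        assert (Ej : pst pi j p0' = Some (TSel q l Q)) by (rewrite Hr; auto using idx2).
        pose proof (sel_partner _ Hs2 Ej H2) as Ea.
        apply (Hn j Hkj Ht). rewrite Ea; simpl; auto.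
      * exact (Hn j Hkj Ht H2).
Qed.

End Proofs.

Theorem mainTheorem5 (Loc Lab : Type) (pi : path Loc Lab) :
  is_path pi -> wf_nstate (pst pi 0) -> (wc_fair pi <-> just pi).
Proof.
  intros Hp _; split; [apply wc_just | apply just_wc]; auto.
Qed.
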